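(* For every homeomorphism $h$ of the Kirch space $(\mathbb{N},\tau_K)$ and every $x\in\mathbb{N}$, $\Pi_x\cup\{2\}=\Pi_{h(x)}\cup\{2\}$.
   Context: $\mathbb{N}=\{1,2,\dots\}$, $\mathbb{N}_0=\{0\}\cup\mathbb{N}$; $\Pi_x$ is the set of prime divisors of $x$. The Kirch topology $\tau_K$ on $\mathbb{N}$ is generated by the base of all $a+b\mathbb{N}_0=\{a+bn:n\in\mathbb{N}_0\}$ with $a,b\in\mathbb{N}$ coprime and $b$ square-free. *)

(* Defs.v *)
From mathcomp Require Import all_boot.
Set Implicit Arguments. Unset Strict Implicit. Unset Printing Implicit Defensive.

Definition Npos := {n : nat | 0 < n}.

Definition squarefree (b : nat) : bool :=
  [forall p : 'I_b.+1, prime p ==> ~~ (p ^ 2 %| b)].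

Definition progr (a b : nat) (x : Npos) : Prop := exists n : nat, val x = a + b * n.

Definition kirch_basic (a b : nat) : Prop :=
  0 < a /\ 0 < b /\ coprime a b /\ squarefree b.

Definition kirch_open (U : Npos -> Prop) : Prop :=
  forall x, U x -> exists a b, kirch_basic a b /\ progr a b x /\
                                (forall y, progr a b y -> U y).

Definition kirch_continuous (f : Npos -> Npos) : Prop :=
  forall U, kirch_open U -> kirch_open (fun x => U (f x)).

Definition kirch_homeomorphism (h : Npos -> Npos) : Prop :=
  exists g : Npos -> Npos, cancel h g /\ cancel g h /\
    kirch_continuous h /\ kirch_continuous g.

Definition Pi (x : nat) : nat -> bool := fun p => prime p && (p %| x).

(* Main.v *)
Require Import Defs.
From mathcomp Require Import all_boot zify.
From Stdlib Require Import Classical IndefiniteDescription.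
Set Implicit Arguments. Unset Strict Implicit. Unset Printing Implicit Defensive.

Definition sqf (n : nat) : Prop := 0 < n /\ forall q, logn q n <= 1.

Lemma sqf_dvd c d : sqf c -> d %| c -> sqf d.
Proof.
move=> [c0 Hc] dc; have d0 : 0 < d by apply: dvdn_gt0 dc.
split=> // q; apply: leq_trans (Hc q); exact: dvdn_leq_log.
Qed.

Lemma sqf_lcm c d : sqf c -> sqf d -> sqf (lcmn c d).
Proof.
move=> [c0 Hc] [d0 Hd]; split; first by rewrite lcmn_gt0 c0 d0.
by move=> q; rewrite logn_lcm // geq_max Hc Hd.
Qed.

Lemma sqf_prime q : prime q -> sqf q.
Proof.
move=> qp; split; first exact: prime_gt0.
by move=> r; rewrite logn_prime //; case: (r == q).
Qed.

Lemma sqf_basic a b : kirch_basic a b -> sqf b.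
Proof.
move=> [a0 [b0 [_ sq]]]; split=> // q; rewrite leqNgt; apply/negP => Hq.
have qp : prime q.
  by move: (ltnW Hq); rewrite logn_gt0 mem_primes => /andP[].
have qb : q %| b by move: (ltnW Hq); rewrite logn_gt0 mem_primes => /and3P[].
have qle : q < b.+1 by rewrite ltnS; apply: dvdn_leq.
move/forallP: sq => /(_ (Ordinal qle)) /= /implyP /(_ qp).
by rewrite pfactor_dvdn // Hq.
Qed.

Lemma sqf_squarefree b : sqf b -> squarefree b.
Proof.
move=> [b0 Hb]; apply/forallP => p; apply/implyP => pp.
by rewrite pfactor_dvdn // -ltnNge ltnS Hb.
Qed.

Lemma coprime_primeP m n : 0 < m ->
  (forall q, prime q -> q %| m -> q %| n -> False) -> coprime m n.
Proof.
move=> m0 H; apply/negPn/negP => nc.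
have g1 : 1 < gcdn m n.
  have : 0 < gcdn m n by rewrite gcdn_gt0 m0.
  by move: nc; rewrite /coprime; case: (gcdn m n) => [|[|k]].
apply: (H (pdiv (gcdn m n))); first exact: pdiv_prime.
  exact: dvdn_trans (pdiv_dvd _) (dvdn_gcdl _ _).
exact: dvdn_trans (pdiv_dvd _) (dvdn_gcdr _ _).
Qed.

Lemma sqf_split c X : sqf c -> 0 < X ->
  coprime (c %/ gcdn c X) X /\ c %| (c %/ gcdn c X) * X /\ sqf (c %/ gcdn c X).
Proof.
move=> [c0 Hc] X0.
have gc : gcdn c X %| c by apply: dvdn_gcdl.
have g0 : 0 < gcdn c X by rewrite gcdn_gt0 c0.
have e0 : 0 < c %/ gcdn c X by rewrite divn_gt0 // dvdn_leq.
have sqe : sqf (c %/ gcdn c X).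
  apply: sqf_dvd (conj c0 Hc) _; apply/dvdnP; exists (gcdn c X); by rewrite mulnC divnK.
split; last split=> //.
- apply: coprime_primeP => // q qp qe qX.
  have : 0 < logn q (c %/ gcdn c X) by rewrite logn_gt0 mem_primes qp e0.
  rewrite logn_div // logn_gcd //.
  have : 0 < logn q X by rewrite logn_gt0 mem_primes qp X0.
  move: (Hc q); lia.
- rewrite -{1}(divnK gc) mulnC [_ * X]mulnC; apply: dvdn_mul => //; exact: dvdn_gcdr.
Qed.

Lemma sqf_coprime_div c q : sqf c -> prime q -> q %| c -> coprime q (c %/ q) /\ sqf (c %/ q).
Proof.
move=> [c0 Hc] qp qc.
have e0 : 0 < c %/ q by rewrite divn_gt0 ?prime_gt0 // dvdn_leq.
split; last by apply: sqf_dvd (conj c0 Hc) _; apply/dvdnP; exists q; rewrite mulnC divnK.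
rewrite prime_coprime //; apply/negP => qd.
have : 0 < logn q (c %/ q) by rewrite logn_gt0 mem_primes qp e0.
rewrite logn_div // (logn_prime _ qp) eqxx.
have : 0 < logn q c by rewrite logn_gt0 mem_primes qp c0.
move: (Hc q); lia.
Qed.

Lemma sqf_dvd_all n G : sqf G -> (forall q, prime q -> q %| G -> q %| n) -> G %| n.
Proof.
elim/ltn_ind: G => G IH sG H.
case: (ltnP 1 G) => [G1|G1].
- set q := pdiv G.
  have qp : prime q by apply: pdiv_prime.
  have qG : q %| G by apply: pdiv_dvd.
  have [cq sq] := sqf_coprime_div sG qp qG.
  rewrite -(divnK qG) mulnC Gauss_dvd // H //= IH //.
  + by rewrite ltn_Pdiv // ?prime_gt1 // ltnW.
  + move=> r rp rd; apply: H => //; apply: dvdn_trans rd _.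
    by apply/dvdnP; exists q; rewrite mulnC divnK.
- have G0 := sG.1; have -> : G = 1 by lia.
  exact: dvd1n.
Qed.

Lemma sqf_cong G a b : sqf G -> (forall q, prime q -> q %| G -> a = b %[mod q]) ->
  a = b %[mod G].
Proof.
move=> sG H.
wlog le : a b H / b <= a.
  move=> W; case: (leqP b a) => h; first exact: W.
  apply/esym/W; last exact: ltnW h.
  by move=> q qp qG; rewrite H.
apply/eqP; rewrite eqn_mod_dvd //; apply: sqf_dvd_all => // q qp qG.
by rewrite -eqn_mod_dvd //; apply/eqP/H.
Qed.

Lemma modnMDr' p m d : m + p * d = m %[mod d].
Proof. by rewrite addnC modnMDl. Qed.

Definition mkN (n : nat) (H : 0 < n) : Npos := exist (fun n => 0 < n) n H.

Lemma CRT2 m n a b : coprime m n -> 0 < m -> 0 < n ->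
  exists s : Npos, val s = a %[mod m] /\ val s = b %[mod n].
Proof.
move=> cmn m0 n0.
have H : 0 < chinese m n a b + m * n by rewrite addn_gt0 muln_gt0 m0 n0 orbT.
exists (mkN H); split => /=.
- by rewrite [m * n]mulnC modnMDr' chinese_modl.
- by rewrite modnMDr' chinese_modr.
Qed.

Lemma F1 c d a b : sqf c -> sqf d ->
  (forall q, prime q -> q %| c -> q %| d -> a = b %[mod q]) ->
  exists s : Npos, val s = a %[mod c] /\ val s = b %[mod d].
Proof.
move=> sc sd H.
have [cop [dv sq]] := sqf_split sd sc.1.
set G := gcdn d c in cop dv sq.
set d' := d %/ G in cop dv sq.
have gd : G %| d by apply: dvdn_gcdl.
have gc : G %| c by apply: dvdn_gcdr.
have dG : d = d' * G by rewrite divnK.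
have cop' : coprime c d' by rewrite coprime_sym.
have [s [s1 s2]] := @CRT2 c d' a b cop' sc.1 sq.1.
exists s; split => //.
have cdG : coprime d' G by apply: coprime_dvdr gc cop.
apply/eqP; rewrite dG chinese_remainder // s2 eqxx /=.
apply/eqP; rewrite -(modn_dvdm _ gc) s1 (modn_dvdm _ gc).
apply: sqf_cong; first exact: sqf_dvd sc gc.
move=> q qp qG; apply: H => //; [exact: dvdn_trans qG gc | exact: dvdn_trans qG gd].
Qed.

Definition cls (t c : nat) (s : Npos) : Prop := val s = t %[mod c].

Definition cl (S : Npos -> Prop) (t : Npos) : Prop :=
  forall U, kirch_open U -> U t -> exists s, U s /\ S s.

Lemma cls_open t c : sqf c -> coprime t c -> kirch_open (cls t c).
Proof.
move=> sc ct s Hs; exists (val s), c; split; last split.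
- split; first exact: (valP s).
  split; first exact: sc.1.
  split; last exact: sqf_squarefree.
  by rewrite -coprime_modl Hs coprime_modl.
- by exists 0; rewrite muln0 addn0.
- move=> y [k yk]; rewrite /cls yk -Hs; by rewrite mulnC modnMDr'.
Qed.

Lemma open_cls U t : kirch_open U -> U t ->
  exists c, sqf c /\ coprime (val t) c /\ (forall s, cls (val t) c s -> U s).
Proof.
move=> oU Ut; have [a [b [[a0 [b0 [cab sqb]]] [[n tn] H]]]] := oU t Ut.
have sb : sqf b by apply: sqf_basic (conj a0 (conj b0 (conj cab sqb))).
have [q qlt qp] := prime_above (val t + b).
set L := lcmn b q.
have L0 : 0 < L by rewrite lcmn_gt0 b0 prime_gt0.
have qL : q %| L by apply: dvdn_lcmr.
have bL : b %| L by apply: dvdn_lcml.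
have tL : val t < L by apply: leq_trans (dvdn_leq L0 qL); lia.
exists L; split; first exact: sqf_lcm sb (sqf_prime qp).
split.
- have ctb : coprime (val t) b by rewrite tn -coprime_modl mulnC modnMDr' coprime_modl.
  have ctq : coprime (val t) q.
    rewrite coprime_sym prime_coprime //; apply/negP => /(dvdn_leq (valP t)); lia.
  have lq : lcmn b q %| b * q by rewrite dvdn_lcm dvdn_mulr // dvdn_mull.
  by apply: coprime_dvdr lq _; rewrite coprimeMr ctb ctq.
- move=> s Hs; apply: H; exists (n + val s %/ L * (L %/ b)).
  rewrite {1}(divn_eq (val s) L) Hs (modn_small tL) tn.
  have E := divnK bL; set X := val s %/ L; set Y := L %/ b in E *.
  rewrite -[X * L](congr1 (muln X) E); nia.
Qed.

Lemma open_and A B : kirch_open A -> kirch_open B -> kirch_open (fun s => A s /\ B s).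
Proof.
move=> oA oB t [At Bt].
have [c1 [s1 [ct1 H1]]] := open_cls oA At.
have [c2 [s2 [ct2 H2]]] := open_cls oB Bt.
have sL : sqf (lcmn c1 c2) by apply: sqf_lcm.
have ctL : coprime (val t) (lcmn c1 c2).
  have lq : lcmn c1 c2 %| c1 * c2 by rewrite dvdn_lcm dvdn_mulr // dvdn_mull.
  by apply: coprime_dvdr lq _; rewrite coprimeMr ct1 ct2.
have [a [b [bab [pt Hp]]]] := cls_open sL ctL (erefl (val t %% _)).
exists a, b; split => //; split => // y /Hp Hy; split.
- by apply: H1; rewrite /cls -(modn_dvdm _ (dvdn_lcml c1 c2)) Hy modn_dvdm // dvdn_lcml.
- by apply: H2; rewrite /cls -(modn_dvdm _ (dvdn_lcmr c1 c2)) Hy modn_dvdm // dvdn_lcmr.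
Qed.

Lemma open_ncl O : kirch_open (fun s => ~ cl O s).
Proof.
move=> s ns.
have [U [oU [Us HU]]] : exists U, kirch_open U /\ U s /\ forall x, U x -> ~ O x.
  apply: NNPP => N; apply: ns => U oU Us; apply: NNPP => N2; apply: N.
  exists U; split => //; split => // x Ux Ox; apply: N2; by exists x.
have [c [sc [cs Hc]]] := open_cls oU Us.
have [a [b [bab [pt Hp]]]] := cls_open sc cs (erefl (val s %% _)).
exists a, b; split => //; split => // y /Hp Hy Cy.
have cy : coprime (val y) c by rewrite -coprime_modl Hy coprime_modl.
have [x [Ux Ox]] := Cy _ (cls_open sc cy) (erefl _).
apply: (HU x) => //; apply: Hc; by rewrite /cls Ux.
Qed.

Lemma cl_cls u e s r : cl (cls u e) s -> prime r -> r %| e ->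
  r %| val s \/ val s = u %[mod r].
Proof.
move=> Cs rp re; apply: NNPP => N.
have nr : ~~ (r %| val s) by apply/negP => h; apply: N; left.
have cr : coprime (val s) r by rewrite coprime_sym prime_coprime.
have [x [xs xu]] := Cs _ (cls_open (sqf_prime rp) cr) (erefl _).
apply: N; right; rewrite -xs; move: xu; rewrite /cls => xu.
by rewrite -(modn_dvdm _ re) xu modn_dvdm.
Qed.

Lemma inj_le m n (R : nat -> nat -> Prop) :
  (forall a, a < m -> exists b, b < n /\ R a b) ->
  (forall a a' b, a < m -> a' < m -> b < n -> R a b -> R a' b -> a = a') -> m <= n.
Proof.
move=> H1 H2.
pose g (i : 'I_m) := constructive_indefinite_description _ (H1 i (ltn_ord i)).
pose f (i : 'I_m) : 'I_n := Ordinal (proj1 (proj2_sig (g i))).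
have finj : injective f.
  move=> i j /(congr1 val) /= E; apply: val_inj => /=.
  apply: (H2 i j (proj1_sig (g i))) => //; first exact: (proj1 (proj2_sig (g i))).
  - exact: (proj2 (proj2_sig (g i))).
  - rewrite E; exact: (proj2 (proj2_sig (g j))).
by have := @leq_card _ _ f finj; rewrite !card_ord.
Qed.

Lemma count_eq m n (R : nat -> nat -> Prop) :
  (forall a, a < m -> exists b, b < n /\ R a b) ->
  (forall b, b < n -> exists a, a < m /\ R a b) ->
  (forall a a' b, a < m -> a' < m -> b < n -> R a b -> R a' b -> a = a') ->
  (forall a b b', a < m -> b < n -> b' < n -> R a b -> R a b' -> b = b') -> m = n.
Proof.
move=> H1 H2 H3 H4; apply/eqP; rewrite eqn_leq (inj_le H1 H3) /=.
apply: (@inj_le n m (fun b a => R a b)) => //.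
by move=> b b' a bn b'n am Rb Rb'; apply: (H4 a b b').
Qed.

Lemma cong_dvd d c a b : d %| c -> a = b %[mod c] -> a = b %[mod d].
Proof. by move=> dc h; rewrite -(modn_dvdm a dc) h modn_dvdm. Qed.

Lemma cop_cong a b c : a = b %[mod c] -> coprime b c -> coprime a c.
Proof. by move=> h hb; rewrite -coprime_modl h coprime_modl. Qed.

Lemma dvd_cong r a b : a = b %[mod r] -> (r %| a) = (r %| b).
Proof. by move=> h; rewrite /dvdn h. Qed.

Lemma cl_mono (A B : Npos -> Prop) t : (forall s, A s -> B s) -> cl A t -> cl B t.
Proof. move=> AB Ct U oU Ut; have [s [Us As]] := Ct U oU Ut; exists s; split => //; exact: AB. Qed.

Lemma prime_ndvd_cop r n : prime r -> ~~ (r %| n) -> coprime n r.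
Proof. by move=> rp h; rewrite coprime_sym prime_coprime. Qed.

Lemma cop_ndvd r n : prime r -> coprime n r -> ~~ (r %| n).
Proof. by move=> rp h; rewrite -prime_coprime // coprime_sym. Qed.

Lemma cop_lcm n a b : coprime n a -> coprime n b -> coprime n (lcmn a b).
Proof.
move=> ha hb; have lq : lcmn a b %| a * b by rewrite dvdn_lcm dvdn_mulr // dvdn_mull.
by apply: coprime_dvdr lq _; rewrite coprimeMr ha hb.
Qed.

Record Fam (p : nat) (V : nat -> Npos -> Prop) (Z : Npos -> Prop) : Prop := {
  f_p : prime p;
  f_p2 : 2 < p;
  f_open : forall a, 0 < a < p -> kirch_open (V a);
  f_disj : forall a b, 0 < a < p -> 0 < b < p -> forall t, V a t -> V b t -> a = b;
  f_cover : forall t, Z t \/ exists a, 0 < a < p /\ V a t;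
  f_cl : forall a, 0 < a < p -> forall t, Z t -> cl (V a) t;
  f_loc : forall t, Z t -> forall W0, kirch_open W0 -> W0 t ->
    exists W, kirch_open W /\ W t /\ (forall s, W s -> W0 s) /\
      forall a, 0 < a < p -> forall V', kirch_open V' -> (forall s, V' s -> V a s /\ W s) ->
        (forall s, Z s -> W s -> cl V' s) -> forall s, V a s -> W s -> cl V' s }.

Lemma fam_meet p V Z a b t : Fam p V Z -> 0 < a < p -> 0 < b < p ->
  V b t -> cl (V a) t -> a = b.
Proof.
move=> F ha hb Vb Ct; have [s [Vbs Vas]] := Ct _ (f_open F hb) Vb.
exact: (f_disj F ha hb Vas Vbs).
Qed.

Lemma fam_ZV p V Z a t : Fam p V Z -> 0 < a < p -> Z t -> V a t -> False.
Proof.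
move=> F ha Zt Vt.
have p2 := f_p2 F.
pose b := if a == 1 then 2 else 1.
have hb : 0 < b < p by rewrite /b; case: (a == 1); apply/andP; split => //; lia.
have := fam_meet F hb ha Vt (f_cl F hb Zt).
rewrite /b; case: (a =P 1) => [->|na] // ba; by apply: na; rewrite -ba.
Qed.

Record Loc (p : nat) (V : nat -> Npos -> Prop) (Z : Npos -> Prop) (r0 u F : nat) (z' : Npos) : Prop := {
  l_r0 : prime r0;
  l_F : sqf F;
  l_zF : coprime (val z') F;
  l_r0F : coprime F r0;
  l_r0z : r0 %| val z';
  l_Zz : Z z';
  l_u : coprime u r0;
  l_i : forall w, cls (val z') F w -> V 1 w -> val w = u %[mod r0];
  l_E : forall a, 0 < a < p -> a != 1 -> forall w, V a w -> cls (val z') F w ->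
          ~~ (r0 %| val w) -> val w = u %[mod r0] -> False }.

Lemma loc_ii p V Z r0 u F z' a w : Fam p V Z -> Loc p V Z r0 u F z' ->
  0 < a < p -> a != 1 -> V a w -> cls (val z') F w ->
  ~~ (r0 %| val w) /\ val w <> u %[mod r0].
Proof.
move=> Fa L ha a1 Vw Nw.
have r0p := l_r0 L.
have nru : ~~ (r0 %| u) := cop_ndvd r0p (l_u L).
have nr : ~~ (r0 %| val w).
  apply/negP => rw.
  have oN : kirch_open (cls (val z') F) by apply: cls_open (l_F L) (l_zF L).
  have [c [sc [cw Hc]]] := open_cls (open_and (f_open Fa ha) oN) (conj Vw Nw).
  have cr : coprime c r0 by rewrite coprime_sym; apply: coprime_dvdl rw cw.
  have [s [s1 s2]] := CRT2 (val w) u cr sc.1 (prime_gt0 r0p).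
  have [Vs Ns] := Hc s s1.
  apply: (l_E L ha a1 Vs Ns) => //.
  by rewrite (dvd_cong s2).
split => // wu; exact: (l_E L ha a1 Vw Nw nr wu).
Qed.

Lemma loc_iii p V Z r0 u F z' t : Fam p V Z -> Loc p V Z r0 u F z' ->
  Z t -> cls (val z') F t -> r0 %| val t.
Proof.
move=> Fa L Zt Nt.
have r0p := l_r0 L.
case: (boolP (r0 %| val t)) => // nr; exfalso.
have ctF : coprime (val t) F := cop_cong Nt (l_zF L).
have ctr := prime_ndvd_cop r0p nr.
have sL : sqf (lcmn F r0) := sqf_lcm (l_F L) (sqf_prime r0p).
have oU := cls_open sL (cop_lcm ctF ctr).
have p2 := f_p2 Fa.
have h1 : 0 < 1 < p by apply/andP; split => //; lia.
have h2 : 0 < 2 < p by apply/andP; split => //; lia.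
have [w1 [U1 V1]] := f_cl Fa h1 Zt oU (erefl _).
have [w2 [U2 V2]] := f_cl Fa h2 Zt oU (erefl _).
have N1 : cls (val z') F w1 by rewrite /cls -Nt; apply: cong_dvd U1; apply: dvdn_lcml.
have N2 : cls (val z') F w2 by rewrite /cls -Nt; apply: cong_dvd U2; apply: dvdn_lcml.
have r1 : val w1 = val t %[mod r0] by apply: cong_dvd U1; apply: dvdn_lcmr.
have r2 : val w2 = val t %[mod r0] by apply: cong_dvd U2; apply: dvdn_lcmr.
have := l_i L N1 V1; rewrite r1 => tu.
have [_ /(_ _)] := loc_ii Fa L h2 (isT : 2 != 1) V2 N2; apply.
by rewrite r2.
Qed.

Lemma cl_pt (t w : Npos) (c ex F r0 : nat) : sqf c -> prime r0 -> c %| ex * (F * r0) -> ex %| val t ->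
  val t = val w %[mod F] -> val t = val w %[mod r0] -> cl (cls (val w) c) t.
Proof.
move=> sc r0p cd et tF tr U oU Ut.
have [d [sd [cdt Hd]]] := open_cls oU Ut.
suff H : forall q, prime q -> q %| d -> q %| c -> val t = val w %[mod q].
  have [s [s1 s2]] := F1 sd sc H.
  by exists s; split => //; apply: Hd.
move=> q qp qd qc.
have nqt : ~~ (q %| val t) by apply: cop_ndvd qp (coprime_dvdr qd cdt).
have nqe : ~~ (q %| ex) by apply: contra nqt => qe; apply: dvdn_trans qe et.
have := dvdn_trans qc cd; rewrite Euclid_dvdM // (negbTE nqe) /= Euclid_dvdM //.
case/orP => [qF|qr].
- exact: cong_dvd qF tF.
- by move: qr; rewrite dvdn_prime2 // => /eqP ->.
Qed.

Lemma loc_v p V Z r0 u F z' a b w w' : Fam p V Z -> Loc p V Z r0 u F z' ->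
  0 < a < p -> 0 < b < p -> a != b -> V a w -> cls (val z') F w ->
  V b w' -> cls (val z') F w' -> val w = val w' %[mod r0] -> ~~ (r0 %| val w) -> False.
Proof.
move=> Fa L ha hb ab Vw Nw Vw' Nw' ww nr.
have r0p := l_r0 L.
have [c [sc [cw Hc]]] := open_cls (f_open Fa ha) Vw.
have [c' [sc' [cw' Hc']]] := open_cls (f_open Fa hb) Vw'.
have X0 : 0 < F * r0 by rewrite muln_gt0 (l_F L).1 prime_gt0.
have [cop1 [dv1 sq1]] := sqf_split sc X0.
have [cop2 [dv2 sq2]] := sqf_split sc' X0.
set ex := c %/ gcdn c (F * r0) in cop1 dv1 sq1.
set ex' := c' %/ gcdn c' (F * r0) in cop2 dv2 sq2.
have cM : coprime (ex * ex') (F * r0) by rewrite coprimeMl cop1 cop2.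
have M0 : 0 < ex * ex' by rewrite muln_gt0 sq1.1 sq2.1.
have [t1 [t11 t12]] := CRT2 (val z') (val w) (l_r0F L) (l_F L).1 (prime_gt0 r0p).
have [t [tM tX]] := CRT2 0 (val t1) cM M0 X0.
have tF : val t = val w %[mod F].
  rewrite Nw; apply: etrans (cong_dvd (dvdn_mulr r0 (dvdnn F)) tX) t11.
have tr : val t = val w %[mod r0].
  apply: etrans (cong_dvd (dvdn_mull F (dvdnn r0)) tX) t12.
have eM : ex * ex' %| val t by rewrite /dvdn tM mod0n.
have e1 : ex %| val t := dvdn_trans (dvdn_mulr _ (dvdnn _)) eM.
have e2 : ex' %| val t := dvdn_trans (dvdn_mull _ (dvdnn _)) eM.
have tF' : val t = val w' %[mod F] by rewrite tF Nw Nw'.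
have tr' : val t = val w' %[mod r0] by rewrite tr ww.
have C1 : cl (V a) t := cl_mono Hc (cl_pt sc r0p dv1 e1 tF tr).
have C2 : cl (V b) t := cl_mono Hc' (cl_pt sc' r0p dv2 e2 tF' tr').
case: (f_cover Fa t) => [Zt|[k [hk Vk]]].
- have := loc_iii Fa L Zt; rewrite /cls tF Nw => /(_ erefl).
  by rewrite (dvd_cong tr) (negbTE nr).
- have k1 := fam_meet Fa ha hk Vk C1.
  have k2 := fam_meet Fa hb hk Vk C2.
  by move: ab; rewrite k1 k2 eqxx.
Qed.

Lemma loc_tri p V Z r0 u F z' a w s : Fam p V Z -> Loc p V Z r0 u F z' ->
  0 < a < p -> V a w -> cls (val z') F w -> ~~ (r0 %| val w) ->
  cls (val z') F s -> val s = val w %[mod r0] -> V a s.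
Proof.
move=> Fa L ha Vw Nw nr Ns sw.
case: (f_cover Fa s) => [Zs|[k [hk Vk]]].
- by have := loc_iii Fa L Zs Ns; rewrite (dvd_cong sw) (negbTE nr).
- case: (k =P a) => [<-//|ka]; exfalso.
  apply: (loc_v Fa L ha hk _ Vw Nw Vk Ns (esym sw) nr).
  by apply/eqP => ak; apply: ka.
Qed.

Lemma loc_vi p V Z r0 u F z' a w w' : Fam p V Z -> Loc p V Z r0 u F z' ->
  0 < a < p -> a != 1 -> V a w -> cls (val z') F w ->
  V a w' -> cls (val z') F w' -> val w = val w' %[mod r0].
Proof.
move=> Fa L ha a1 Vw Nw Vw' Nw'.
have r0p := l_r0 L.
apply: NNPP => ne.
have [nrw _] := loc_ii Fa L ha a1 Vw Nw.
have [nrw' _] := loc_ii Fa L ha a1 Vw' Nw'.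
have oN := cls_open (l_F L) (l_zF L).
have [W [oW [Wz [WN cp]]]] := f_loc Fa (l_Zz L) oN (erefl _).
pose V'' := fun s => V a s /\ (W s /\ cls (val w) r0 s).
have oV : kirch_open V''.
  apply: open_and (f_open Fa ha) (open_and oW (cls_open (sqf_prime r0p) _)).
  exact: prime_ndvd_cop r0p nrw.
have sub : forall s, V'' s -> V a s /\ W s by move=> s [? [? _]].
have HZW : forall s, Z s -> W s -> cl V'' s.
  move=> s Zs Ws U oU Us.
  have rs := loc_iii Fa L Zs (WN s Ws).
  have [d [sd [cd Hd]]] := open_cls (open_and oU oW) (conj Us Ws).
  have cdr : coprime d r0 by rewrite coprime_sym; apply: coprime_dvdl rs cd.
  have [q [q1 q2]] := CRT2 (val s) (val w) cdr sd.1 (prime_gt0 r0p).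
  have [Uq Wq] := Hd q q1.
  exists q; split => //; split; last by split.
  exact: loc_tri Fa L ha Vw Nw nrw (WN q Wq) q2.
have C := cp a ha V'' oV sub HZW.
have [d [sd [cd Hd]]] := open_cls oW Wz.
have cdr : coprime d r0 by rewrite coprime_sym; apply: coprime_dvdl (l_r0z L) cd.
have [s [s1 s2]] := CRT2 (val z') (val w') cdr sd.1 (prime_gt0 r0p).
have Ws := Hd s s1.
have Vs := loc_tri Fa L ha Vw' Nw' nrw' (WN s Ws) s2.
have cs : coprime (val s) r0 by apply: cop_cong s2 (prime_ndvd_cop r0p nrw').
have [q [q1 [_ [_ q2]]]] := C s Vs Ws _ (cls_open (sqf_prime r0p) cs) (erefl _).
by apply: ne; rewrite -q2 q1 s2.
Qed.

Lemma loc_count p V Z r0 u F z' : Fam p V Z -> Loc p V Z r0 u F z' -> r0 = p.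
Proof.
move=> Fa L.
have r0p := l_r0 L.
have p2 := f_p2 Fa.
have r00 := prime_gt0 r0p.
have oN := cls_open (l_F L) (l_zF L).
have nru : ~~ (r0 %| u) := cop_ndvd r0p (l_u L).
pose R i j := exists w, V i.+1 w /\ cls (val z') F w /\ val w %% r0 = j.+1.
suff : p.-1 = r0.-1 by lia.
apply: (@count_eq _ _ R).
- move=> i ip; have ha : 0 < i.+1 < p by apply/andP; split => //; lia.
  have [w [Nw Vw]] := f_cl Fa ha (l_Zz L) oN (erefl _).
  have nr : ~~ (r0 %| val w).
    case: (i.+1 =P 1) => [e1|n1].
    - rewrite e1 in Vw; by rewrite (dvd_cong (l_i L Nw Vw)).
    - by have [] := loc_ii Fa L ha (introN eqP n1) Vw Nw.
  have w0 : 0 < val w %% r0 by move: nr; rewrite /dvdn lt0n.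
  exists (val w %% r0).-1; split; first by have := ltn_pmod (val w) r00; lia.
  by exists w; split => //; split => //; rewrite prednK.
- move=> j jr.
  have [s [s1 s2]] := CRT2 (val z') j.+1 (l_r0F L) (l_F L).1 r00.
  have js : val s %% r0 = j.+1 by rewrite s2 modn_small //; lia.
  case: (f_cover Fa s) => [Zs|[k [hk Vk]]].
  + by have := loc_iii Fa L Zs s1; rewrite /dvdn js.
  + exists k.-1; split; first by lia.
    by exists s; rewrite prednK //; lia.
- move=> i i' j ip i'p jr [w [Vw [Nw wj]]] [w' [Vw' [Nw' wj']]].
  apply: NNPP => ne.
  have ha : 0 < i.+1 < p by apply/andP; split => //; lia.
  have hb : 0 < i'.+1 < p by apply/andP; split => //; lia.
  apply: (loc_v Fa L ha hb _ Vw Nw Vw' Nw').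
  + by apply/eqP => e; apply: ne; lia.
  + by rewrite /= wj wj'.
  + by rewrite /dvdn wj.
- move=> i j j' ip jr j'r [w [Vw [Nw wj]]] [w' [Vw' [Nw' wj']]].
  have ha : 0 < i.+1 < p by apply/andP; split => //; lia.
  case: (i.+1 =P 1) => [e1|n1].
  + rewrite e1 in Vw Vw'.
    have := l_i L Nw Vw; have := l_i L Nw' Vw'; rewrite wj wj' => <- e.
    by apply/eq_add_S.
  + have := loc_vi Fa L ha (introN eqP n1) Vw Nw Vw' Nw'.
    rewrite wj wj'; by case.
Qed.

Lemma ncl_nbhd (S : Npos -> Prop) t : ~ cl S t ->
  exists U, kirch_open U /\ U t /\ forall x, U x -> ~ S x.
Proof.
move=> ns; apply: NNPP => N; apply: ns => U oU Ut; apply: NNPP => N2; apply: N.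
exists U; split => //; split => // x Ux Sx; apply: N2; by exists x.
Qed.

Lemma odd_of_cop n c : 2 %| c -> coprime n c -> n %% 2 = 1.
Proof.
move=> c2 nc; move: (coprime_dvdr c2 nc).
move=> h; have := cop_ndvd (isT : prime 2) h.
by rewrite dvdn2 negbK modn2 => ->.
Qed.

Lemma cl_self (S : Npos -> Prop) t : S t -> cl S t.
Proof. by move=> St U _ Ut; exists t. Qed.

Lemma prime_gt2 q : prime q -> q != 2 -> 2 < q.
Proof. move=> qp q2; have := prime_gt1 qp; move: q2; rewrite neq_ltn; lia. Qed.

Lemma fam_div p V Z y : Fam p V Z -> Z y -> p %| val y.
Proof.
move=> Fa Zy.
have pp := f_p Fa; have p2 := f_p2 Fa.
case: (boolP (p %| val y)) => // nyp; exfalso.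
have h1 : 0 < 1 < p by apply/andP; split => //; lia.
have h2 : 0 < 2 < p by apply/andP; split => //; lia.
have oW0 := cls_open (sqf_prime pp) (prime_ndvd_cop pp nyp).
have [W [oW [Wy [WW0 cp]]]] := f_loc Fa Zy oW0 (erefl _).
have [u [Wu V1u]] := f_cl Fa h1 Zy oW Wy.
have [e [se [cue He]]] := open_cls (open_and (f_open Fa h1) oW) (conj V1u Wu).
pose O := cls (val u) e.
have oO : kirch_open O := cls_open se cue.
pose V' := fun s => V 1 s /\ (W s /\ ~ cl O s).
have oV' : kirch_open V'.
  have h := open_and (f_open Fa h1) (open_and oW (@open_ncl O)); exact: h.
have sub : forall s, V' s -> V 1 s /\ W s by move=> s [? [? _]].
have nu : ~ cl V' u.
  move=> C; have [s [Os [_ [_ nO]]]] := C O oO (erefl _); apply: nO; exact: cl_self.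
have [z [Zz [Wz nz]]] : exists z, Z z /\ W z /\ ~ cl V' z.
  apply: NNPP => N; apply: nu; apply: (cp 1 h1 V' oV' sub _ u V1u Wu).
  move=> s Zs Ws; apply: NNPP => ns; apply: N; by exists s.
have [U [oU [Uz HU]]] := ncl_nbhd nz.
have [f [sf [czf Hf]]] := open_cls (open_and oU oW) (conj Uz Wz).
have oNf := cls_open sf czf.
have Kcl : forall s, cls (val z) f s -> V 1 s -> cl O s.
  move=> s Ns V1s; have [Us Ws] := Hf s Ns; apply: NNPP => nO.
  by apply: (HU s Us).
have cur : forall r, prime r -> r %| e -> coprime (val u) r.
  by move=> r rp re; apply: coprime_dvdr re cue.
have K : forall w, cls (val z) f w -> V 1 w -> forall r, prime r -> 2 < r -> r %| e ->
    val w = val u %[mod r].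
  move=> w Nw V1w r rp r2 re.
  case: (cl_cls (Kcl w Nw V1w) rp re) => // rw.
  have [c [sc [cwc Hc]]] := open_cls (open_and (f_open Fa h1) oNf) (conj V1w Nw).
  have cr : coprime c r by rewrite coprime_sym; apply: coprime_dvdl rw cwc.
  pose d := if val u %% r == 1 then 2 else 1.
  have dr : d < r by rewrite /d; case: (_ == _); lia.
  have [s [s1 s2]] := CRT2 (val w) d cr sc.1 (prime_gt0 rp).
  have [V1s Ns] := Hc s s1.
  rewrite (modn_small dr) in s2.
  case: (cl_cls (Kcl s Ns V1s) rp re) => [rs|su].
  - by move: rs; rewrite /dvdn s2 /d; case: ifP.
  - move: su; rewrite s2 /d; case: ifP => [/eqP h|h] e2; first lia.
    by rewrite -e2 eqxx in h.
have Kz : forall q, prime q -> 2 < q -> q %| e -> ~~ (q %| val z) ->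
    val z = val u %[mod q].
  move=> q qp q2 qe nqz.
  have oq := cls_open (sqf_lcm sf (sqf_prime qp)) (cop_lcm czf (prime_ndvd_cop qp nqz)).
  have [w [Nw V1w]] := f_cl Fa h1 Zz oq (erefl _).
  have Nw' : cls (val z) f w by apply: cong_dvd Nw; apply: dvdn_lcml.
  rewrite -(K w Nw' V1w q qp q2 qe); apply/esym; apply: cong_dvd Nw; apply: dvdn_lcmr.
have [r0 [r0p [r02 [r0e r0z]]]] :
    exists r0, prime r0 /\ 2 < r0 /\ r0 %| e /\ r0 %| val z.
  apply: NNPP => H.
  have [cop [dv sq]] := sqf_split se (valP z).
  set ex := e %/ gcdn e (val z) in cop dv sq.
  have oN2 := cls_open (sqf_lcm sf sq) (cop_lcm czf (eq_ind _ _ cop _ (coprime_sym _ _))).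
  have [w' [Nw' V2w']] := f_cl Fa h2 Zz oN2 (erefl _).
  have [c' [sc' [cwc' Hc']]] := open_cls (f_open Fa h2) V2w'.
  suff [s [s1 s2]] : exists s : Npos, val s = val w' %[mod c'] /\ val s = val u %[mod e].
    have V2s := Hc' s s1.
    have [V1s _] := He s s2.
    by have := f_disj Fa h1 h2 V1s V2s.
  apply: F1 => // q qp qc qe.
  case: (q =P 2) => [q2|nq2].
  - rewrite q2 in qc qe *; rewrite (odd_of_cop qc cwc') (odd_of_cop qe cue) //.
  - have q2 : 2 < q by apply: prime_gt2 => //; apply/eqP.
    have nqz : ~~ (q %| val z).
      by apply/negP => qz; apply: H; exists q.
    have qex : q %| ex.
      by move: (dvdn_trans qe dv); rewrite Euclid_dvdM // (negbTE nqz) orbF.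
    rewrite -(Kz q qp q2 qe nqz); apply: cong_dvd Nw'.
    exact: dvdn_trans qex (dvdn_lcmr _ _).
have [cre' sqe'] := sqf_coprime_div se r0p r0e.
set e' := e %/ r0 in cre' sqe'.
have ee' : e = e' * r0 by rewrite divnK.
have e'e : e' %| e by rewrite ee' dvdn_mulr.
have cr0f : coprime r0 f by apply: coprime_dvdl r0z czf.
have [t0 [t01 t02]] : exists t0 : Npos, val t0 = val u %[mod e'] /\ val t0 = val z %[mod f].
  apply: F1 => // q qp qe' qf.
  have qe : q %| e := dvdn_trans qe' e'e.
  have nqz : ~~ (q %| val z) by apply: cop_ndvd qp (coprime_dvdr qf czf).
  case: (q =P 2) => [q2|nq2].
  - rewrite q2 in qe qf *; rewrite (odd_of_cop qe cue) (odd_of_cop qf czf) //.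
  - have q2 : 2 < q by apply: prime_gt2 => //; apply/eqP.
    by rewrite (Kz q qp q2 qe nqz).
have cM : coprime (e' * f) r0 by rewrite coprimeMl (coprime_sym e') cre' coprime_sym cr0f.
have M0 : 0 < e' * f by rewrite muln_gt0 sqe'.1 sf.1.
have [z' [z'1 z'2]] := CRT2 (val t0) 0 cM M0 (prime_gt0 r0p).
have z'e' : val z' = val u %[mod e'] := etrans (cong_dvd (dvdn_mulr f (dvdnn e')) z'1) t01.
have z'f : val z' = val z %[mod f] := etrans (cong_dvd (dvdn_mull e' (dvdnn f)) z'1) t02.
have r0z' : r0 %| val z' by rewrite /dvdn z'2 mod0n.
have ce'u : coprime (val u) e' := coprime_dvdr e'e cue.
have cz'F : coprime (val z') (lcmn f e') := cop_lcm (cop_cong z'f czf) (cop_cong z'e' ce'u).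
have cFr : coprime (lcmn f e') r0 by rewrite coprime_sym; apply: cop_lcm cr0f cre'.
have NfF : forall w, cls (val z') (lcmn f e') w -> cls (val z) f w.
  move=> w Nw; rewrite /cls -z'f; apply: cong_dvd Nw; exact: dvdn_lcml.
have sepE : forall a, 0 < a < p -> a != 1 -> forall (w : Npos) c, sqf c ->
    (forall s, cls (val w) c s -> V a s) ->
    (forall q, prime q -> q %| c -> q %| e -> val w = val u %[mod q]) -> False.
  move=> a ha a1 w c sc Hc Hq.
  have [s [s1 s2]] := F1 sc se Hq.
  have [V1s _] := He s s2.
  by move: a1; rewrite (f_disj Fa ha h1 (Hc s s1) V1s).
have qe' : forall q, prime q -> q %| e -> q != r0 -> q %| e'.
  move=> q qp qe qr; by move: qe; rewrite ee' Euclid_dvdM // (dvdn_prime2 qp r0p) (negbTE qr) orbF.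
have nr0u : ~~ (r0 %| val u) := cop_ndvd r0p (cur r0 r0p r0e).
have L : Loc p V Z r0 (val u) (lcmn f e') z'.
  split => //.
  - exact: sqf_lcm sf sqe'.
  - case: (f_cover Fa z') => [//|[k [hk Vk]]]; exfalso.
    case: (k =P 1) => [k1|nk1].
    + rewrite k1 in Vk; have := K z' z'f Vk r0 r0p r02 r0e.
      by move/dvd_cong; rewrite r0z' (negbTE nr0u).
    + have [c [sc [cz'c Hc]]] := open_cls (f_open Fa hk) Vk.
      apply: (sepE k hk (introN eqP nk1) z' c sc Hc) => q qp qc qe.
      have qr : q != r0.
        apply/eqP => qr0; rewrite qr0 in qc.
        by have := cop_ndvd r0p (coprime_dvdr qc cz'c); rewrite r0z'.
      exact: cong_dvd (qe' q qp qe qr) z'e'.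
  - exact: cur r0 r0p r0e.
  - move=> w Nw V1w; exact: K w (NfF w Nw) V1w r0 r0p r02 r0e.
  - move=> a ha a1 w Vw Nw nrw wu.
    have [c [sc [cwc Hc]]] := open_cls (f_open Fa ha) Vw.
    apply: (sepE a ha a1 w c sc Hc) => q qp qc qe.
    case: (q =P r0) => [->//|/eqP qr].
    have wz : val w = val z' %[mod e'] by apply: cong_dvd Nw; apply: dvdn_lcmr.
    by apply: cong_dvd (qe' q qp qe qr) _; rewrite wz z'e'.
have rp := loc_count Fa L.
have Wz' : W z' := (Hf z' z'f).2.
have := WW0 z' Wz'; rewrite /cls => /dvd_cong; rewrite -rp r0z' rp (negbTE nyp).
by [].
Qed.

Lemma TL (f k : Npos -> Npos) : cancel f k -> cancel k f -> kirch_continuous f ->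
  forall (S : Npos -> Prop) t, cl S (k t) -> cl (fun s => S (k s)) t.
Proof.
move=> fk kf cf S t C U oU Ut.
have [s0 [Us0 Ss0]] := C _ (cf U oU) (eq_ind_r U Ut (kf t)).
by exists (f s0); rewrite fk.
Qed.

Lemma cl_conc p s W0 : prime p -> p %| val s -> kirch_open W0 -> W0 s ->
  exists W, kirch_open W /\ W s /\ (forall x, W x -> W0 x) /\
   forall a, 0 < a < p -> forall V', kirch_open V' -> (forall x, V' x -> cls a p x /\ W x) ->
     (forall x, p %| val x -> W x -> cl V' x) -> forall x, cls a p x -> W x -> cl V' x.
Proof.
move=> pp ps oW0 W0s.
have [c [sc [csc Hc]]] := open_cls oW0 W0s.
have oW := cls_open sc csc.
exists (cls (val s) c); split => //; split => //; split => // a ha V' oV' sub HZ x Vx Wx U oU Ux.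
have [d0 [sd0 [cxd0 Hd0]]] := open_cls (open_and oU oW) (conj Ux Wx).
have [cop [dv sq]] := sqf_split sd0 (prime_gt0 pp).
set d1 := d0 %/ gcdn d0 p in cop dv sq.
have cpc : coprime p c by apply: coprime_dvdl ps csc.
have cDp : coprime (lcmn d1 c) p.
  by rewrite coprime_sym; apply: cop_lcm => //; rewrite coprime_sym.
have sD : sqf (lcmn d1 c) := sqf_lcm sq sc.
have [z [z1 z2]] := CRT2 (val x) 0 cDp sD.1 (prime_gt0 pp).
have zc : val z = val x %[mod c] by apply: cong_dvd z1; apply: dvdn_lcmr.
have Wz : cls (val s) c z by rewrite /cls zc.
have pz : p %| val z by rewrite /dvdn z2 mod0n.
have cxd1 : coprime (val x) d1 by apply: coprime_dvdr _ cxd0; apply/dvdnP; exists (gcdn d0 p); rewrite mulnC divnK // dvdn_gcdl.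
have cxc : coprime (val x) c by apply: cop_cong Wx csc.
have czD : coprime (val z) (lcmn d1 c) := cop_cong z1 (cop_lcm cxd1 cxc).
have [w [w1 w2]] := HZ z pz Wz _ (cls_open sD czD) (erefl _).
suff wd0 : cls (val x) d0 w by exists w; split => //; exact: (Hd0 w wd0).1.
have [wa _] := sub w w2.
have wd1 : val w = val x %[mod d1] by rewrite -(cong_dvd (dvdn_lcml d1 c) z1); apply: cong_dvd w1; apply: dvdn_lcml.
have wp : val w = val x %[mod p] by rewrite wa Vx.
have : val w = val x %[mod d1 * p] by apply/eqP; rewrite (chinese_remainder cop) wd1 wp !eqxx.
exact: cong_dvd dv.
Qed.

Lemma fam_conc (h g : Npos -> Npos) p : cancel h g -> cancel g h ->
  kirch_continuous h -> kirch_continuous g -> prime p -> 2 < p ->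
  Fam p (fun a t => cls a p (g t)) (fun t => p %| val (g t)).
Proof.
move=> hg gh ch cg pp p2.
have cap : forall a, 0 < a < p -> coprime a p.
  move=> a /andP[a0 ap]; apply: prime_ndvd_cop pp _; by rewrite gtnNdvd.
split => //.
- move=> a ha; apply: (cg (cls a p)); exact: cls_open (sqf_prime pp) (cap a ha).
- move=> a b /andP[_ ap] /andP[_ bp] t; rewrite /cls => ->.
  by rewrite !modn_small.
- move=> t; case: (boolP (p %| val (g t))) => [|np]; first by left.
  right; exists (val (g t) %% p); split; last by rewrite /cls modn_mod.
  apply/andP; split; last exact: ltn_pmod _ (prime_gt0 pp).
  by move: np; rewrite /dvdn lt0n.
- move=> a ha t pt; apply: (TL hg gh ch (S := cls a p)).
  move=> U oU Ut.
  have [d [sd [cd Hd]]] := open_cls oU Ut.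
  have cdp : coprime d p by rewrite coprime_sym; apply: coprime_dvdl pt cd.
  have [s [s1 s2]] := CRT2 (val (g t)) a cdp sd.1 (prime_gt0 pp).
  by exists s; split => //; apply: Hd.
- move=> t pt W0 oW0 W0t.
  have oW0h : kirch_open (fun x => W0 (h x)) := ch W0 oW0.
  have [W [oW [Wt [WW0 cc]]]] := cl_conc pp pt oW0h (eq_ind_r W0 W0t (gh t)).
  exists (fun x => W (g x)); split; first exact: cg W oW.
  split => //; split; first by move=> x /WW0; rewrite gh.
  move=> a ha V' oV' sub HZ x Vx Wx.
  pose V'' := fun y => V' (h y).
  have oV'' : kirch_open V'' := ch V' oV'.
  have sub'' : forall y, V'' y -> cls a p y /\ W y by move=> y /sub; rewrite hg.
  have HZ'' : forall y, p %| val y -> W y -> cl V'' y.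
    move=> y py Wy; apply: (TL gh hg cg (S := V')).
    by apply: HZ; rewrite hg.
  have C := cc a ha V'' oV'' sub'' HZ'' (g x) Vx Wx.
  have C2 := TL hg gh ch C.
  by apply: cl_mono C2 => s; rewrite /V'' gh.
Qed.

Lemma key (h g : Npos -> Npos) : cancel h g -> cancel g h ->
  kirch_continuous h -> kirch_continuous g ->
  forall (x : Npos) p, prime p -> 2 < p -> p %| val x -> p %| val (h x).
Proof.
move=> hg gh ch cg x p pp p2 px.
have Fa := fam_conc hg gh ch cg pp p2.
by apply: (fam_div Fa); rewrite hg.
Qed.

Unset Implicit Arguments.

Theorem lemma3p16 (h : Npos -> Npos) :
  kirch_homeomorphism h ->
  forall (x : Npos) (p : nat),
    (Pi (val x) p || (p == 2)) = (Pi (val (h x)) p || (p == 2)).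
Proof.
move=> [g [hg [gh [ch cg]]]] x p.
case: (p =P 2) => [->|/eqP p2]; first by rewrite !orbT.
rewrite !orbF /Pi; case: (boolP (prime p)) => pp; last by [].
rewrite !andTb.
have p3 : 2 < p := prime_gt2 pp p2.
apply/idP/idP => H.
- exact (key hg gh ch cg pp p3 H).
- have K := key gh hg cg ch pp p3 H; by rewrite hg in K.
Qed.
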